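(* Let $W\ge1$ and $1\le k^*\le W$ be integers, and let $A,B\in\mathbb{C}^{W\times W}$ be Hermitian positive semidefinite matrices such that: (1) (Hankel decay) there exist constants $C,\alpha>0$ with $\lambda_j(A)\le Ce^{-\alpha j}$ for all $j\ge1$; (2) (Slepian structure) there exist constants $C',c'>0$ with $\lambda_j(B)\le C'$ for $j\le k^*$ and $\sum_{j>k^*}\lambda_j(B)\le e^{-c'W}$. Then there exist constants $K,\alpha'>0$ depending only on $C,\alpha,C',c'$ such that for all integers $s\ge1$ with $sk^*+1\le W$, \[ \lambda_{sk^*+1}(A\circ B)\le Ke^{-\alpha' s}. \] In particular, for every $k$ with $k^*\le k\le W$, $\lambda_k(A\circ B)\le K\exp\!\big(-\alpha'\lfloor k/k^*\rfloor\big)$ (after possibly enlarging $K$).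
   Context: For a Hermitian matrix $M$, $\lambda_1(M)\ge\lambda_2(M)\ge\dots$ denote its eigenvalues in decreasing order. $A\circ B$ denotes the entrywise (Hadamard) product. *)

(* Defs.v *)
From HB Require Import structures.
From mathcomp Require Import all_boot all_order all_algebra.
From mathcomp Require Import complex.
From mathcomp Require Import reals sequences exp.
From Stdlib Require Import ClassicalEpsilon.
Set Implicit Arguments. Unset Strict Implicit. Unset Printing Implicit Defensive.
Import Order.TTheory GRing.Theory Num.Theory.
Local Open Scope ring_scope.
Local Open Scope complex_scope.

Section Defs.
Variable R : realType.

Definition adjmx m n (A : 'M[R[i]]_(m, n)) : 'M[R[i]]_(n, m) :=
  (map_mx Num.conj A)^T.

Definition hermitian n (A : 'M[R[i]]_n) : Prop := adjmx A = A.

(* Hermitian positive semidefinite: x^* A x >= 0 for every vector x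
   (in the order of R[i], 0 <= z means z is real and nonnegative) *)
Definition psd n (A : 'M[R[i]]_n) : Prop :=
  hermitian A /\ forall v : 'cV[R[i]]_n, 0 <= (adjmx v *m A *m v) 0 0.

(* eigenvalue lists: real sequences, sorted decreasingly, whose associated
   monic polynomial is the characteristic polynomial (i.e. the eigenvalues
   counted with algebraic multiplicity) *)
Definition is_eigseq n (A : 'M[R[i]]_n) (s : seq R) : Prop :=
  sorted (fun x y => y <= x) s /\
  char_poly A = \prod_(x <- s) ('X - (x%:C)%:P).

(* the (decreasingly ordered) eigenvalues of A; for Hermitian A such a list
   exists and is unique *)
Definition eigseq n (A : 'M[R[i]]_n) : seq R :=
  epsilon (inhabits [::]) (is_eigseq A).

(* lambda_j(A), 1-indexed: lam A 1 is the largest eigenvalue *)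
Definition lam n (A : 'M[R[i]]_n) (j : nat) : R := nth 0 (eigseq A) j.-1.

Definition hadamard m n (A B : 'M[R[i]]_(m, n)) : 'M[R[i]]_(m, n) :=
  \matrix_(p, q) (A p q * B p q).
End Defs.

(* Main.v *)
Require Import Defs.
From HB Require Import structures.
From mathcomp Require Import all_boot all_order all_algebra.
From mathcomp Require Import complex.
From mathcomp Require Import reals sequences exp.
From mathcomp Require Import zify ring lra.
From Stdlib Require Import Lia.
Set Implicit Arguments. Unset Strict Implicit. Unset Printing Implicit Defensive.
Import Order.TTheory GRing.Theory Num.Theory.
Local Open Scope ring_scope.

Lemma sorted_count_le (R : realType) (s : seq R) (m : nat) (t : R) :
  sorted (fun x y => y <= x) s -> nth 0 s m <= t ->
  (count (fun x : R => (t < x)%R) s <= m)%N.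
Proof.
elim: s m => [|x s IH] m //= Hs.
have Hall : all (fun y => y <= x) s.
  by apply: (order_path_min (fun a b c h1 h2 => le_trans h2 h1)) Hs.
case: m => [|m] /= Hx.
  rewrite ltNge Hx /= add0n leqn0; apply/eqP; rewrite -(count_pred0 s).
  by apply: eq_in_count => y /(allP Hall) Hy /=; rewrite ltNge (le_trans Hy Hx).
have := IH m (path_sorted Hs) Hx; case: (t < x) => /=; lia.
Qed.

Lemma sorted_nth_le (R : realType) (s : seq R) (m : nat) (t : R) :
  sorted (fun x y => y <= x) s -> 0 <= t ->
  (count (fun x : R => (t < x)%R) s <= m)%N -> nth 0 s m <= t.
Proof.
elim: s m => [|x s IH] m //= Hs t0; first by rewrite nth_nil.
have Hall : all (fun y => y <= x) s.
  by apply: (order_path_min (fun a b c h1 h2 => le_trans h2 h1)) Hs.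
have [Htx|Htx] := boolP (t < x).
  move=> Hc.
  case: m Hc => [|m] //= Hc; apply: IH => //; first exact: path_sorted Hs.
rewrite -leNgt in Htx.
case: m => [|m] //= Hc.
have [Hm|Hm] := ltnP m (size s).
  by apply: le_trans Htx; apply: (allP Hall); apply: mem_nth.
by rewrite nth_default.
Qed.

Local Open Scope complex_scope.
Local Open Scope sesquilinear_scope.

Lemma adjmxE (R : realType) m n (M : 'M[R[i]]_(m,n)) : adjmx M = M ^t*.
Proof. by rewrite /adjmx map_trmx. Qed.

Lemma adjmxK (R : realType) m n (M : 'M[R[i]]_(m,n)) : adjmx (adjmx M) = M.
Proof. by rewrite !adjmxE trmxCK. Qed.

Lemma adjmxM (R : realType) m n p (M : 'M[R[i]]_(m,n)) (N : 'M[R[i]]_(n,p)) :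
  adjmx (M *m N) = adjmx N *m adjmx M.
Proof. by rewrite /adjmx map_mxM trmx_mul. Qed.

Definition evec (R : realType) n (A : 'M[R[i]]_n) : 'rV[R[i]]_n :=
  \row_i ((@complex.Re R (spectral_diag A 0 i))%:C).

Lemma spec_herm (R : realType) n (A : 'M[R[i]]_n) : Defs.hermitian A ->
  [/\ spectralmx A *m adjmx (spectralmx A) = 1%:M,
      adjmx (spectralmx A) *m spectralmx A = 1%:M &
      A = adjmx (spectralmx A) *m diag_mx (evec A) *m spectralmx A ].
Proof.
rewrite /Defs.hermitian adjmxE => hA.
have Pu := spectral_unitarymx A.
have Pun := unitarymx_unit Pu.
have e1 : spectralmx A *m adjmx (spectralmx A) = 1%:M.
  by rewrite adjmxE; apply/unitarymxP.
have e2 : adjmx (spectralmx A) *m spectralmx A = 1%:M.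
  by rewrite adjmxE -invmx_unitary // mulVmx.
split => //.
have Hn : A \is normalmx by apply/normalmxP; rewrite hA.
have Hh : A \is hermsymmx by apply/is_hermitianmxP; rewrite expr0 scale1r hA.
have /mxOverP Hr := hermitian_spectral_diag_real Hh.
have -> : evec A = spectral_diag A.
  apply/rowP => i; rewrite mxE; exact: RRe_real (Hr 0 i).
rewrite adjmxE -invmx_unitary //.
exact/orthomx_spectralP.
Qed.

Lemma char_poly_conj (R : realType) n (P D : 'M[R[i]]_n) :
  adjmx P *m P = 1%:M -> char_poly (adjmx P *m D *m P) = char_poly D.
Proof.
move=> HP; rewrite /char_poly /char_poly_mx.
set f := map_mx (@polyC R[i]).
have -> : 'X%:M - f (adjmx P *m D *m P) =
          f (adjmx P) *m ('X%:M - f D) *m f P.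
  rewrite /f !map_mxM mulmxBr mulmxBl; congr (_ - _).
  by rewrite scalar_mxC -mulmxA -map_mxM HP map_mx1 mulmx1.
rewrite !det_mulmx mulrAC -det_mulmx -map_mxM HP /f map_mx1 det1 mul1r //.
Qed.

Lemma char_poly_diag (R : realType) n (d : 'rV[R[i]]_n) :
  char_poly (diag_mx d) = \prod_(i < n) ('X - (d 0 i)%:P).
Proof.
rewrite char_poly_trig; last first.
  apply/is_trig_mxP => i j lt_ij; rewrite mxE.
  by rewrite (_ : (i == j) = false) ?mulr0n // -val_eqE ltn_eqF.
by apply: eq_bigr => i _; rewrite mxE eqxx mulr1n.
Qed.

Definition ev (R : realType) n (A : 'M[R[i]]_n) (i : 'I_n) : R :=
  @complex.Re R (spectral_diag A 0 i).

Lemma eigseq_spec (R : realType) n (A : 'M[R[i]]_n) : Defs.hermitian A ->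
  sorted (fun x y => y <= x) (eigseq A) /\
  perm_eq (eigseq A) [seq ev A i | i <- enum 'I_n].
Proof.
move=> hA; have [_ HP HA] := spec_herm hA.
set ls := [seq ev A i | i <- enum 'I_n].
have Hc : char_poly A = \prod_(x <- ls) ('X - (x%:C)%:P).
  rewrite {1}HA char_poly_conj // char_poly_diag /ls big_map big_enum /=.
  by apply: eq_bigr => i _; rewrite mxE.
have Hex : exists s, is_eigseq A s.
  exists (sort (fun x y => y <= x) ls); split.
    by apply: sort_sorted => x y; exact: le_total.
  rewrite Hc; apply: perm_big; first [by rewrite perm_sort | by rewrite perm_sym perm_sort].
have [Hs Hp] := ClassicalEpsilon.epsilon_spec (inhabits [::]) _ Hex.
split; first exact Hs.
have HK : forall s : seq R, map (@complex.Re R) (map (fun x => x%:C) s) = s.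
  by elim => //= x s ->.
rewrite -[eigseq _]HK -[ls]HK; apply: perm_map; apply: prod_XsubC_eq.
have E : forall s : seq R, \prod_(x <- map (fun x => x%:C) s) ('X - x%:P)
   = \prod_(x <- s) ('X - (x%:C)%:P) :> {poly R[i]}.
  by move=> s; rewrite big_map.
by rewrite !E -Hc /eigseq -Hp.
Qed.

Lemma qdiag (R : realType) n (u d : 'rV[R[i]]_n) :
  (u *m diag_mx d *m adjmx u) 0 0 = \sum_k d 0 k * (u 0 k * Num.conj (u 0 k)).
Proof.
rewrite mul_mx_diag !mxE; apply: eq_bigr => k _; rewrite !mxE.
by rewrite mulrAC mulrC.
Qed.

Lemma qnorm (R : realType) n (u : 'rV[R[i]]_n) :
  (u *m adjmx u) 0 0 = \sum_k (u 0 k * Num.conj (u 0 k)).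
Proof. by rewrite !mxE; apply: eq_bigr => k _; rewrite !mxE. Qed.

Lemma ev_ge0 (R : realType) n (A : 'M[R[i]]_n) : psd A -> forall i, 0 <= ev A i.
Proof.
move=> [hA Hq] i; have [HP1 HP2 HA] := spec_herm hA.
have E : spectralmx A *m adjmx (row i (spectralmx A)) = adjmx (row i (1%:M : 'M[R[i]]_n)).
  by rewrite -HP1 row_mul adjmxM adjmxK.
have := Hq (adjmx (row i (spectralmx A))); rewrite adjmxK.
move: HA HP1 E; rewrite /ev.
set P := spectralmx A; set D := evec A => HA HP1 E.
have -> : row i P *m A *m adjmx (row i P)
   = row i 1%:M *m diag_mx D *m adjmx (row i (1%:M : 'M[R[i]]_n)).
  by rewrite {1}HA !mulmxA -row_mul HP1 -!mulmxA E.
rewrite qdiag (bigD1 i) //= big1 ?addr0; last first.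
  by move=> k /negbTE Hk; rewrite !mxE eq_sym Hk mul0r mulr0.
by rewrite !mxE eqxx /= conjC1 mulr1 mulr1 ler0c.
Qed.

Lemma selL (R : realType) m n0 n p (f : 'I_m -> 'I_n0) (P : 'M[R[i]]_(n0, n))
  (Q : 'M[R[i]]_(n, p)) :
  (\matrix_(r, k) P (f r) k) *m Q = \matrix_(r, j) (P *m Q) (f r) j.
Proof. by apply/matrixP => a b; rewrite !mxE; apply: eq_bigr => k _; rewrite mxE. Qed.

Lemma selR (R : realType) m n0 n p (f : 'I_m -> 'I_n0) (P : 'M[R[i]]_(n0, n))
  (Y : 'M[R[i]]_(p, n)) :
  Y *m adjmx (\matrix_(r, k) P (f r) k) = \matrix_(a, b) (Y *m adjmx P) a (f b).
Proof. by apply/matrixP => a b; rewrite !mxE; apply: eq_bigr => k _; rewrite !mxE. Qed.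

Lemma minmax (R : realType) n (H P : 'M[R[i]]_n) (h : 'I_n -> R) (I : finType)
  (Z : {set I}) (g : I -> 'rV[R[i]]_n) (M : R) :
  P *m adjmx P = 1%:M -> adjmx P *m P = 1%:M ->
  H = adjmx P *m diag_mx (\row_l (h l)%:C) *m P ->
  (forall u : 'rV[R[i]]_n, (forall z, z \in Z -> (u *m adjmx (g z)) 0 0 = 0) ->
      (u *m H *m adjmx u) 0 0 <= M%:C * (u *m adjmx u) 0 0) ->
  (#|[set l | (M < h l)%R]| <= #|Z|)%N.
Proof.
move=> HP1 HP2 HH Hq; set T := [set l | (M < h l)%R].
rewrite leqNgt; apply/negP => HTZ.
pose f : 'I_#|T| -> 'I_n := enum_val.
pose Pt : 'M[R[i]]_(#|T|, n) := \matrix_(r, k) P (f r) k.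
pose fz : 'I_#|Z| -> I := enum_val.
pose Gm : 'M[R[i]]_(#|Z|, n) := \matrix_(r, k) g (fz r) 0 k.
pose X := Pt *m adjmx Gm.
have rk : (0 < \rank (kermx X))%N.
  by rewrite mxrank_ker; have := rank_leq_col X; lia.
have Hk : kermx X != 0 by rewrite -mxrank_eq0 -lt0n.
have [r Hr] : exists r, row r (kermx X) != 0.
  case: (pickP (fun r => row r (kermx X) != 0)) => [r Hr|H0]; first by exists r.
  exfalso; move/negP: Hk; apply; apply/eqP/row_matrixP => r; rewrite row0.
  by apply/eqP; rewrite -[_ == _]negbK H0.
set c := row r (kermx X) in Hr.
have cX : c *m X = 0 by apply/sub_kermxP; exact: row_sub.
pose E := Pt *m adjmx P.
have Ef : forall a l, E a l = (f a == l)%:R.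
  by move=> a l; rewrite /E /Pt selL mxE HP1 mxE.
have PtPt : Pt *m adjmx Pt = 1%:M.
  rewrite /Pt selR selL HP1.
  apply/matrixP => a b; rewrite !mxE (inj_eq (@enum_val_inj _ _)).
  by [].
have EE : E *m adjmx E = 1%:M.
  by rewrite /E adjmxM adjmxK mulmxA -(mulmxA Pt) HP2 mulmx1 PtPt.
pose w := c *m E.
have wE : w *m adjmx E = c by rewrite /w -mulmxA EE mulmx1.
have w0 : w != 0 by apply: contraNneq Hr => w0; rewrite -wE w0 mul0mx.
have wT : forall l, l \notin T -> w 0 l = 0.
  move=> l Hl; rewrite !mxE big1 // => a _; rewrite Ef.
  have : f a \in T by exact: enum_valP.
  by case: eqP => [->|]; [rewrite (negbTE Hl)|rewrite mulr0].
have Hu := Hq (c *m Pt).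
have Hu2 : (forall z, z \in Z -> (c *m Pt *m adjmx (g z)) 0 0 = 0).
  move=> z Hz.
  pose rz : 'I_#|Z| := enum_rank_in Hz z.
  have Hrz : fz rz = z by rewrite /fz /rz enum_rankK_in.
  move/matrixP: cX => /(_ 0 rz).
  rewrite /X mulmxA !mxE => H0; rewrite -[RHS]H0.
  by apply: eq_bigr => k _; rewrite /adjmx !mxE Hrz.
have {Hu Hu2} := Hu Hu2.
have -> : c *m Pt *m H *m adjmx (c *m Pt) = w *m diag_mx (\row_l (h l)%:C) *m adjmx w.
  rewrite HH /w /E !adjmxM !adjmxK !mulmxA; reflexivity.
have -> : c *m Pt *m adjmx (c *m Pt) = w *m adjmx w.
  rewrite /w !adjmxM !mulmxA -(mulmxA c) PtPt mulmx1.
  by rewrite adjmxK -[c *m Pt *m adjmx P *m P]mulmxA HP2 mulmx1 -(mulmxA c) PtPt mulmx1.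
rewrite qdiag qnorm mulr_sumr -subr_le0 -sumrB.
pose F := fun k => ((h k)%:C - M%:C) * (w 0 k * Num.conj (w 0 k)).
rewrite (eq_bigr F); last by move=> k _; rewrite /F mxE mulrBl.
have F0 : forall l, 0 <= F l.
  move=> l; rewrite /F; have [Hl|Hl] := boolP (l \in T).
    apply: mulr_ge0; last exact: mul_conjC_ge0.
    by rewrite subr_ge0 lecR; move: Hl; rewrite inE => /ltW.
  by rewrite wT // mul0r mulr0.
move=> Hs; have Hs0 : \sum_k F k = 0 by apply: le_anti; rewrite Hs sumr_ge0.
have := psumr_eq0P (fun l _ => F0 l) Hs0 => HF.
move/negP: w0; apply; apply/eqP/rowP => l; rewrite [RHS]mxE.
have [Hl|Hl] := boolP (l \in T); last exact: wT.
have := HF l isT; rewrite /F => /eqP; rewrite mulf_eq0 => /orP[|].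
  rewrite subr_eq0 => /eqP /complexI E1; move: Hl; rewrite inE E1.
  by rewrite ltxx.
by rewrite mul_conjC_eq0 => /eqP.
Qed.

Lemma entry_spec (R : realType) n (P : 'M[R[i]]_n) (d : 'rV[R[i]]_n) p q :
  (adjmx P *m diag_mx d *m P) p q = \sum_i Num.conj (P i p) * d 0 i * P i q.
Proof.
rewrite mul_mx_diag !mxE; apply: eq_bigr => i _; rewrite !mxE //.
Qed.

Definition wv (R : realType) n (Pa Pb : 'M[R[i]]_n) (i j : 'I_n) : 'rV[R[i]]_n :=
  \row_q (Pa i q * Pb j q).

Lemma had_decomp (R : realType) n (Pa Pb : 'M[R[i]]_n) (da db : 'rV[R[i]]_n) :
  hadamard (adjmx Pa *m diag_mx da *m Pa) (adjmx Pb *m diag_mx db *m Pb) =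
  \sum_i \sum_j (da 0 i * db 0 j) *: (adjmx (wv Pa Pb i j) *m wv Pa Pb i j).
Proof.
apply/matrixP => p q; rewrite /hadamard mxE !entry_spec summxE mulr_suml.
apply: eq_bigr => i _; rewrite summxE mulr_sumr; apply: eq_bigr => j _.
rewrite !mxE big_ord1 /adjmx !mxE rmorphM /=.
ring.
Qed.

Lemma entry11 (R : realType) n (u v : 'rV[R[i]]_n) :
  (v *m adjmx u) 0 0 = Num.conj ((u *m adjmx v) 0 0).
Proof.
rewrite !mxE rmorph_sum; apply: eq_bigr => k _; rewrite /adjmx !mxE rmorphM /=.
by rewrite conjCK mulrC.
Qed.

Lemma qhad (R : realType) n (Pa Pb : 'M[R[i]]_n) (da db : 'rV[R[i]]_n) (u : 'rV[R[i]]_n) :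
  (u *m hadamard (adjmx Pa *m diag_mx da *m Pa) (adjmx Pb *m diag_mx db *m Pb)
     *m adjmx u) 0 0 =
  \sum_i \sum_j (da 0 i * db 0 j) *
     ((u *m adjmx (wv Pa Pb i j)) 0 0 * Num.conj ((u *m adjmx (wv Pa Pb i j)) 0 0)).
Proof.
rewrite had_decomp mulmx_sumr mulmx_suml summxE; apply: eq_bigr => i _.
rewrite mulmx_sumr mulmx_suml summxE; apply: eq_bigr => j _.
rewrite -scalemxAr -scalemxAl mxE; congr (_ * _).
by rewrite !mulmxA -(mulmxA (u *m adjmx _)) mxE big_ord1 entry11 conjCK.
Qed.

Lemma parseval (R : realType) n (Pa Pb : 'M[R[i]]_n) (u : 'rV[R[i]]_n) :
  adjmx Pa *m Pa = 1%:M -> adjmx Pb *m Pb = 1%:M ->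
  \sum_i \sum_j ((u *m adjmx (wv Pa Pb i j)) 0 0 *
        Num.conj ((u *m adjmx (wv Pa Pb i j)) 0 0)) = (u *m adjmx u) 0 0.
Proof.
move=> Ha Hb; rewrite exchange_big /=.
pose z j : 'rV[R[i]]_n := \row_q (u 0 q * Num.conj (Pb j q)).
have S1 : forall j, \sum_i ((u *m adjmx (wv Pa Pb i j)) 0 0 *
        Num.conj ((u *m adjmx (wv Pa Pb i j)) 0 0)) = (z j *m adjmx (z j)) 0 0.
  move=> j.
  have -> : z j *m adjmx (z j) = (z j *m adjmx Pa) *m adjmx (z j *m adjmx Pa).
    by rewrite adjmxM adjmxK mulmxA -(mulmxA (z j)) Ha mulmx1.
  rewrite qnorm; apply: eq_bigr => i _.
  suff -> : (u *m adjmx (wv Pa Pb i j)) 0 0 = (z j *m adjmx Pa) 0 i by [].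
  rewrite !mxE; apply: eq_bigr => k _; rewrite /adjmx !mxE rmorphM /=.
  ring.
rewrite (eq_bigr _ (fun j _ => S1 j)) qnorm.
under eq_bigr => j _ do rewrite qnorm.
rewrite exchange_big /=; apply: eq_bigr => q _.
have /matrixP/(_ q q) := Hb; rewrite !mxE eqxx mulr1n => Hq.
rewrite -[RHS]mulr1 -Hq mulr_sumr; apply: eq_bigr => j _.
rewrite /adjmx !mxE rmorphM /= conjCK.
ring.
Qed.

Lemma qbound (R : realType) n (Pa Pb : 'M[R[i]]_n) (a b : 'I_n -> R)
  (SA SB : {set 'I_n}) (M : R) (u : 'rV[R[i]]_n) :
  adjmx Pa *m Pa = 1%:M -> adjmx Pb *m Pb = 1%:M ->
  (forall i j, ~~ ((i \in SA) && (j \in SB)) -> a i * b j <= M) ->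
  (forall z, z \in setX SA SB -> (u *m adjmx (wv Pa Pb z.1 z.2)) 0 0 = 0) ->
  (u *m hadamard (adjmx Pa *m diag_mx (\row_i (a i)%:C) *m Pa)
      (adjmx Pb *m diag_mx (\row_j (b j)%:C) *m Pb) *m adjmx u) 0 0
   <= M%:C * (u *m adjmx u) 0 0.
Proof.
move=> Ha Hb Hab Hz; rewrite qhad -(parseval u Ha Hb) mulr_sumr.
apply: ler_sum => i _; rewrite mulr_sumr; apply: ler_sum => j _.
have -> : (\row_i (a i)%:C) 0 i = (a i)%:C :> R[i] by rewrite mxE.
have -> : (\row_j (b j)%:C) 0 j = (b j)%:C :> R[i] by rewrite mxE.
have [Hij|Hij] := boolP ((i \in SA) && (j \in SB)).
  have := Hz (i, j); rewrite in_setX => /(_ Hij) /= ->.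
  by rewrite mul0r !mulr0.
apply: ler_wpM2r; first exact: mul_conjC_ge0.
by rewrite -rmorphM /= lecR; apply: Hab.
Qed.

Lemma hadamard_herm (R : realType) n (A B : 'M[R[i]]_n) :
  Defs.hermitian A -> Defs.hermitian B -> Defs.hermitian (hadamard A B).
Proof.
rewrite /Defs.hermitian => hA hB.
apply/matrixP => p q.
have /matrixP/(_ p q) := hA; have /matrixP/(_ p q) := hB.
rewrite /adjmx /hadamard !mxE => <- <-; rewrite rmorphM.
by [].
Qed.

Local Close Scope sesquilinear_scope.

Lemma ineq1 (R : realType) (C alpha alpha' C' x : R) :
  0 < C -> 0 < C' -> 0 <= alpha' -> alpha' <= alpha -> 0 <= x ->
  C * expR (- alpha * x) * C' <= C * (C' + 1) * expR (- alpha' * x).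
Proof.
move=> HC HC' Ha Haa Hx.
have e : expR (- alpha * x) <= expR (- alpha' * x).
  rewrite ler_expR !mulNr lerN2; exact: ler_wpM2r.
have e1 := expR_gt0 (- alpha' * x).
apply: (le_trans (y := C * C' * expR (- alpha' * x))).
  rewrite mulrAC; apply: ler_wpM2l => //; exact: mulr_ge0 (ltW HC) (ltW HC').
apply: ler_wpM2r; first exact: ltW.
apply: ler_wpM2l; first exact: ltW.
lra.
Qed.

Lemma ineq2 (R : realType) (C alpha alpha' c' C' x y : R) :
  0 < C -> 0 < C' -> 0 < alpha -> 0 <= alpha' -> alpha' <= c' -> 0 <= x -> x <= y ->
  C * expR (- alpha * 1) * expR (- c' * y) <= C * (C' + 1) * expR (- alpha' * x).
Proof.
move=> HC HC' Ha Ha' Hac Hx Hxy.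
have e : expR (- c' * y) <= expR (- alpha' * x).
  rewrite ler_expR !mulNr lerN2; apply: (le_trans (ler_wpM2l Ha' Hxy)).
  apply: ler_wpM2r => //; exact: le_trans Hxy.
have ea : expR (- alpha * 1) <= 1 by rewrite expR_le1 mulr1 oppr_le0 ltW.
have e1 := expR_gt0 (- alpha' * x).
apply: (le_trans (y := C * 1 * expR (- alpha' * x))).
  rewrite -mulrA -(mulrA C); apply: ler_wpM2l; first exact: ltW.
  by apply: ler_pM => //; exact: expR_ge0.
apply: ler_wpM2r; first exact: ltW.
apply: ler_wpM2l; first exact: ltW.
lra.
Qed.

Lemma count_ev (R : realType) n (f : 'I_n -> R) (s : seq R) (p : pred R) :
  perm_eq s [seq f i | i <- enum 'I_n] -> count p s = #|[set i | p (f i)]|.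
Proof.
move/permP => ->; rewrite count_map cardsE cardE /enum_mem size_filter.
by rewrite (@eq_filter _ _ predT) // filter_predT; apply: eq_count.
Qed.
Lemma eig_props (R : realType) n (A : 'M[R[i]]_n) : psd A ->
  [/\ sorted (fun x y => y <= x) (eigseq A),
      perm_eq (eigseq A) [seq ev A i | i <- enum 'I_n],
      forall i, 0 <= ev A i & size (eigseq A) = n].
Proof.
move=> pA; have [Hs Hp] := eigseq_spec pA.1; split => //.
  exact: ev_ge0.
by rewrite (perm_size Hp) size_map size_enum_ord.
Qed.

Lemma card_gt (R : realType) n (A : 'M[R[i]]_n) (t : R) (m : nat) : psd A ->
  lam A m.+1 <= t -> (#|[set i | (t < ev A i)%R]| <= m)%N.
Proof.
move=> pA Hl; have [Hs Hp _ _] := eig_props pA.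
rewrite -(count_ev (fun x => (t < x)%R) Hp); exact: sorted_count_le.
Qed.

Lemma ev_le_lam1 (R : realType) n (A : 'M[R[i]]_n) : psd A ->
  forall i, ev A i <= lam A 1.
Proof.
move=> pA i; have := @card_gt _ _ A (lam A 1) 0 pA (lexx _).
rewrite leqn0 cards_eq0 => /eqP /setP /(_ i); rewrite !inE => /negbT.
by rewrite -leNgt.
Qed.

Lemma lam_ge0 (R : realType) n (A : 'M[R[i]]_n) : psd A -> forall j, 0 <= lam A j.
Proof.
move=> pA j; have [_ Hp H0 _] := eig_props pA; rewrite /lam.
have [Hj|Hj] := ltnP j.-1 (size (eigseq A)); last by rewrite nth_default.
have := mem_nth 0 Hj; rewrite (perm_mem Hp) => /mapP [i _ ->]; exact: H0.
Qed.

Lemma count_H (R : realType) n (A : 'M[R[i]]_n) (t : R) (m : nat) :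
  Defs.hermitian A -> 0 <= t ->
  (#|[set i | (t < ev A i)%R]| <= m)%N -> lam A m.+1 <= t.
Proof.
move=> hA t0 Hc; have [Hs Hp] := eigseq_spec hA.
rewrite /lam /=; apply: sorted_nth_le => //.
by rewrite (count_ev (fun x => (t < x)%R) Hp).
Qed.

Local Close Scope complex_scope.

Theorem mainTheorem9 (R : realType) (C alpha C' c' : R) :
  0 < C -> 0 < alpha -> 0 < C' -> 0 < c' ->
  exists K alpha' : R, 0 < K /\ 0 < alpha' /\
  forall (W kstar : nat) (A B : 'M[R[i]]_W),
    (1 <= W)%N -> (1 <= kstar <= W)%N ->
    psd A -> psd B ->
    (forall j : nat, (1 <= j)%N -> lam A j <= C * expR (- alpha * j%:R)) ->
    (forall j : nat, (1 <= j <= kstar)%N -> lam B j <= C') ->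
    \sum_(kstar.+1 <= j < W.+1) lam B j <= expR (- c' * W%:R) ->
    (forall s : nat, (1 <= s)%N -> (s * kstar + 1 <= W)%N ->
       lam (hadamard A B) (s * kstar + 1) <= K * expR (- alpha' * s%:R)) /\
    (forall k : nat, (kstar <= k <= W)%N ->
       lam (hadamard A B) k <= K * expR (- alpha' * (k %/ kstar)%:R)).
Proof.
move=> HC Ha HC' Hc'.
pose a' := if alpha <= c' then alpha else c'.
have [Ha'0 [Ha'a Ha'c]] : 0 < a' /\ a' <= alpha /\ a' <= c'.
  by rewrite /a'; case: ifP => [h|/negbT h]; [|rewrite -ltNge in h]; (split; [|split]); lra.
have HK : 0 < C * (C' + 1) by apply: mulr_gt0 => //; apply: addr_gt0.
exists (C * (C' + 1)), a'; split => //; split => //.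
move=> W k A B HW Hk pA pB HA HB Hs.
have hH := hadamard_herm pA.1 pB.1.
have [PA1 PA2 HAe] := spec_herm pA.1.
have [PB1 PB2 HBe] := spec_herm pB.1.
have [PH1 PH2 HHe] := spec_herm hH.
have /andP [k1 kW] := Hk.
pose Mb (s : nat) := C * (C' + 1) * expR (- a' * (s.+1)%:R).
have Mb0 : forall s, 0 <= Mb s.
  by move=> s; apply: mulr_ge0; [exact: ltW | exact: expR_ge0].
pose eps := expR (- c' * W%:R).
have lamB : lam B k.+1 <= eps.
  have [HkW|HkW] := ltnP k W.
    move: Hs; rewrite big_ltn ?ltnS // => Hs'; apply: le_trans Hs'.
    rewrite lerDl; apply: sumr_ge0 => j _; exact: lam_ge0.
  have [_ _ _ Hsz] := eig_props pB.
  rewrite /lam /= nth_default ?Hsz //; exact: expR_ge0.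
have core : forall s, (s * k + 1 <= W)%N ->
    (#|[set i | (Mb s < ev (hadamard A B) i)%R]| <= s * k)%N.
  move=> s Hs1.
  pose tA := C * expR (- alpha * (s.+1)%:R).
  set SA := [set i | (tA < ev A i)%R].
  set SB := [set j | (eps < ev B j)%R].
  have cSA : (#|SA| <= s)%N by apply: card_gt pA _; exact: HA.
  have cSB : (#|SB| <= k)%N by apply: card_gt pB _; exact: lamB.
  apply: leq_trans (leq_mul cSA cSB); rewrite -cardsX.
  apply: (minmax (h := ev (hadamard A B))
     (g := fun z => wv (spectralmx A) (spectralmx B) z.1 z.2) PH1 PH2 HHe).
  move=> u Hu; rewrite {1}HAe {1}HBe.
  apply: (qbound (a := ev A) (b := ev B) (SA := SA) (SB := SB)) => //.
  have [_ _ gA _] := eig_props pA.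
  have [_ _ gB _] := eig_props pB.
  have sW : (s.+1 <= W)%N by move: Hs1 k1; clear; nia.
  move=> i j; rewrite negb_and !inE -!leNgt => /orP [Hi|Hj].
    apply: le_trans (ineq1 (x := (s.+1)%:R) HC HC' (ltW Ha'0) Ha'a (ler0n _ _)).
    apply: ler_pM => //; apply: le_trans (ev_le_lam1 pB j) _; apply: HB.
    by rewrite leqnn k1.
  apply: le_trans (ineq2 (x := (s.+1)%:R) (y := W%:R) HC HC' Ha (ltW Ha'0) Ha'c
         (ler0n _ _) _); last by rewrite ler_nat.
  apply: ler_pM => //; apply: le_trans (ev_le_lam1 pA i) _.
  by have := HA 1%N isT; rewrite mulr1n.
split.
  move=> s s1 Hs1; rewrite addn1.
  apply: le_trans (count_H hH (Mb0 s) (core s Hs1)) _.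
  rewrite /Mb; apply: ler_wpM2l; first exact: ltW.
  rewrite ler_expR -natr1 mulrDr mulr1; lra.
move=> k0 /andP [Hk0 Hk0W].
have s1 : (0 < k0 %/ k)%N by rewrite divn_gt0.
have Hdiv : (k0 %/ k * k <= k0)%N := leq_trunc_div k0 k.
have Hs0 : ((k0 %/ k).-1 * k + 1 <= W)%N.
  move: s1 Hdiv k1 Hk0W; clear; set q := (k0 %/ k)%N; nia.
have k00 : (0 < k0)%N by apply: leq_trans k1 Hk0.
rewrite -{1}(prednK k00).
apply: le_trans (count_H hH (Mb0 _) (leq_trans (core _ Hs0) _)) _.
  move: s1 Hdiv k1; clear; set q := (k0 %/ k)%N; nia.
by rewrite /Mb prednK.
Qed.
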